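(* Let $m,n$ be positive integers. Every extreme point of the convex set $\Gamma^\pi_{m,n}$ of $m\times n$ centrosymmetric stochastic matrices can be written in the form $\frac{1}{2}(R+R^\pi)$ for some $m\times n$ rectangular permutation matrix $R$.
   Context: A real $m\times n$ matrix $A=(a_{i,j})$ is stochastic if all entries are nonnegative and every row sums to $1$. For $A\in M_{m,n}$, $A^\pi$ denotes the $m\times n$ matrix with $(A^\pi)_{i,j}=a_{m+1-i,n+1-j}$ (rotation by $180^\circ$); $A$ is centrosymmetric if $A=A^\pi$. $\Gamma^\pi_{m,n}$ is the set of $m\times n$ centrosymmetric stochastic matrices. A rectangular permutation matrix is an $m\times n$ $(0,1)$-matrix with exactly one $1$ in each row. *)

(* Defs.v *)
From HB Require Import structures.
From mathcomp Require Import all_boot all_order all_algebra.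
From mathcomp Require Import reals.
Set Implicit Arguments. Unset Strict Implicit. Unset Printing Implicit Defensive.
Import Order.TTheory GRing.Theory Num.Theory.
Local Open Scope ring_scope.

Definition stochastic (R : realType) (m n : nat) (A : 'M[R]_(m, n)) : Prop :=
  (forall i j, 0 <= A i j) /\ (forall i, \sum_(j < n) A i j = 1).

(* A^pi : rotation by 180 degrees, (A^pi)_{i,j} = a_{m+1-i, n+1-j}
   (0-based: A (rev_ord i) (rev_ord j)). *)
Definition mxpi (R : Type) (m n : nat) (A : 'M[R]_(m, n)) : 'M[R]_(m, n) :=
  \matrix_(i < m, j < n) A (rev_ord i) (rev_ord j).

Definition centrosymmetric (R : Type) (m n : nat) (A : 'M[R]_(m, n)) : Prop :=
  A = mxpi A.

Definition Gamma_pi (R : realType) (m n : nat) (A : 'M[R]_(m, n)) : Prop :=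
  centrosymmetric A /\ stochastic A.

Definition extreme_point (R : realType) (m n : nat)
  (S : 'M[R]_(m, n) -> Prop) (A : 'M[R]_(m, n)) : Prop :=
  S A /\
  forall (B C : 'M[R]_(m, n)) (t : R), S B -> S C -> 0 < t -> t < 1 ->
    A = t *: B + (1 - t) *: C -> B = C.

Definition rect_perm_mx (R : realType) (m n : nat) (P : 'M[R]_(m, n)) : Prop :=
  (forall i j, P i j = 0 \/ P i j = 1) /\
  (forall i, exists! j, P i j = 1).

(* Main.v *)
Require Import Defs.
From HB Require Import structures.
From mathcomp Require Import all_boot all_order all_algebra.
From mathcomp Require Import reals.
From mathcomp Require Import lra.
Import Order.TTheory GRing.Theory Num.Theory.
Local Open Scope ring_scope.

Lemma rev_eq (p : nat) (l j : 'I_p) : (rev_ord l == j) = (l == rev_ord j).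
Proof. by apply/eqP/eqP => [<-|->]; rewrite rev_ordK. Qed.

Lemma sum_ind (R : realType) (p : nat) (b : bool) (j : 'I_p) :
  \sum_(l < p) ((b && (l == j))%:R : R) = b%:R.
Proof.
case: b => /=; last by rewrite big1.
by rewrite (bigD1 j) //= eqxx big1 ?addr0 // => l /negbTE ->.
Qed.

Lemma sum_ind_rev (R : realType) (p : nat) (b : bool) (j : 'I_p) :
  \sum_(l < p) ((b && (rev_ord l == j))%:R : R) = b%:R.
Proof.
under eq_bigr => l _ do rewrite rev_eq.
exact: sum_ind.
Qed.

Lemma centroE (R : realType) m n (A : 'M[R]_(m, n)) :
  centrosymmetric A -> forall k l, A k l = A (rev_ord k) (rev_ord l).
Proof. by rewrite /centrosymmetric => hA k l; rewrite {1}hA mxE. Qed.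

Lemma key (R : realType) m n (A : 'M[R]_(m, n)) :
  extreme_point (@Gamma_pi R m n) A ->
  forall i j1 j2, 0 < A i j1 -> 0 < A i j2 -> j1 != j2 ->
  (i == rev_ord i) && (j2 == rev_ord j1).
Proof.
move=> [[hc [hpos hsum]] hext] i j1 j2 h1 h2 hne.
apply/negPn/negP => hb.
have hAc := @centroE R m n A hc.
set e := Num.min (A i j1) (A i j2) / 2.
have he : 0 < e by rewrite divr_gt0 // lt_min h1 h2.
have he1 : 2 * e <= A i j1.
  by rewrite /e mulrC divfK ?pnatr_eq0 // ge_min lexx.
have he2 : 2 * e <= A i j2.
  by rewrite /e mulrC divfK ?pnatr_eq0 // ge_min lexx orbT.
pose dd k l : R := e * ((((k == i) && (l == j1))%:R - ((k == i) && (l == j2))%:R)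
   + (((rev_ord k == i) && (rev_ord l == j1))%:R - ((rev_ord k == i) && (rev_ord l == j2))%:R)).
have Gs : forall s : R, (s = 1 \/ s = -1) ->
    Gamma_pi (\matrix_(k, l) (A k l + s * dd k l)).
  move=> s hs; split; [|split].
  - apply/matrixP => k l; rewrite /mxpi !mxE -hAc.
    congr (_ + s * _); rewrite /dd; congr (e * _); rewrite !rev_ordK addrC //.
  - move=> k l; rewrite mxE.
    have hb1 : forall (p : bool) j, p = (k == i) && (l == j) ->
        (j = j1 \/ j = j2) -> p%:R * (2 * e) <= A k l.
      move=> p j -> hj; case: (k == i) /eqP => [->|] /=; last by rewrite mul0r hpos.
      case: (l == j) /eqP => [->|_] /=; last by rewrite mul0r hpos.
      by rewrite mul1r; case: hj => ->.
    have hb2 : forall (p : bool) j, p = (rev_ord k == i) && (rev_ord l == j) ->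
        (j = j1 \/ j = j2) -> p%:R * (2 * e) <= A k l.
      move=> p j -> hj; rewrite hAc.
      case: (rev_ord k == i) /eqP => [->|] /=; last by rewrite mul0r hpos.
      case: (rev_ord l == j) /eqP => [->|_] /=; last by rewrite mul0r hpos.
      by rewrite mul1r; case: hj => ->.
    have := hb1 _ _ erefl (or_introl erefl).
    have := hb1 _ _ erefl (or_intror erefl).
    have := hb2 _ _ erefl (or_introl erefl).
    have := hb2 _ _ erefl (or_intror erefl).
    have := hpos k l.
    rewrite /dd.
    case: ((k == i) && (l == j1)); case: ((k == i) && (l == j2));
    case: ((rev_ord k == i) && (rev_ord l == j1));
    case: ((rev_ord k == i) && (rev_ord l == j2)) => /=;
    case: hs => ->; rewrite ?mulr1n ?mulr0n; lra.
  - move=> k; rewrite (eq_bigr (fun l => A k l + s * dd k l)); last by move=> l _; rewrite mxE.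
    rewrite big_split /= hsum -mulr_sumr.
    rewrite /dd -mulr_sumr big_split /= !sumrB !sum_ind !sum_ind_rev.
    by rewrite !subrr addr0 mulr0 mulr0 addr0.
have := hext _ _ (2^-1) (Gs 1 (or_introl erefl)) (Gs (-1) (or_intror erefl)).
have ht : (0 : R) < 2^-1 by rewrite invr_gt0.
have ht' : (2^-1 : R) < 1 by rewrite invf_lt1 // ltr1n.
move=> /(_ ht ht') H.
have : A = 2^-1 *: \matrix_(k, l) (A k l + 1 * dd k l) + (1 - 2^-1) *: \matrix_(k, l) (A k l + -1 * dd k l).
  apply/matrixP => k l; rewrite !mxE.
  have -> : (1 - 2^-1 : R) = 2^-1 by rewrite {1}(splitr 1) mul1r addrK.
  by rewrite mul1r mulN1r; lra.
move=> /H /matrixP /(_ i j1); rewrite !mxE mul1r mulN1r => Heq.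
have hd : dd i j1 = 0 by lra.
move: hd; rewrite /dd eqxx (negbTE hne) /=.
move: hb; case: (rev_ord i == i) /eqP => [hi|] /=.
  rewrite {1}hi eqxx /= rev_eq eqxx => hb.
  have -> : (rev_ord j1 == j2) = false by rewrite eq_sym; exact: negbTE hb.
  case: (j1 == rev_ord j1) => /=; rewrite ?mulr1n ?mulr0n; lra.
by move=> _ _; rewrite eqxx ?mulr1n ?mulr0n; lra.
Qed.

Lemma row_shape (R : realType) m n (A : 'M[R]_(m, n)) :
  extreme_point (@Gamma_pi R m n) A -> forall i, exists j, forall k,
  A i k = if i == rev_ord i then ((k == j)%:R + (k == rev_ord j)%:R) / 2
          else (k == j)%:R.
Proof.
move=> hE i; have hK := @key R m n A hE i.
case: hE => [[hc [hpos hsum]] _].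
have hAc := @centroE R m n A hc.
have [j hj] : exists j, 0 < A i j.
  case: (pickP (fun j => 0 < A i j)) => [j hj|h0]; first by exists j.
  have := hsum i; rewrite big1; first by move=> /esym/eqP; rewrite oner_eq0.
  move=> k _.
  by apply/eqP; rewrite eq_le hpos andbT leNgt h0.
have hz : forall k, k != j -> ~~ ((i == rev_ord i) && (k == rev_ord j)) -> A i k = 0.
  move=> k hk hn; apply/eqP; rewrite eq_le hpos andbT leNgt; apply/negP => hp.
  by move: (hK j k hj hp); rewrite eq_sym (negbTE hk) => /(_ isT) h; rewrite h in hn.
exists j => k.
case: (i =P rev_ord i) => [hi|hi].
- have hsym : forall l, A i l = A i (rev_ord l) by move=> l; rewrite {1}hAc -hi.
  have hs := hsum i.
  rewrite (bigD1 j) //= in hs.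
  case: (j =P rev_ord j) => [hj'|hj'].
  + rewrite big1 ?addr0 in hs; last first.
      by move=> l hl; apply: hz => //; rewrite -hj' (negbTE hl) andbF.
    rewrite -hj'.
    case: (k =P j) => [->|hk]; first by rewrite hs ?eqxx /= ?mulr1n; lra.
    have -> : A i k = 0.
      by apply: hz; [apply/eqP | rewrite -hj' (introF eqP hk) andbF].
    by rewrite /= mulr0n addr0 mul0r.
  + rewrite (bigD1 (rev_ord j)) /= in hs; last by apply/eqP => h; apply: hj'.
    rewrite -[A i (rev_ord j)]hsym in hs.
    rewrite big1 ?addr0 in hs; last first.
      by move=> l /andP [hl1 hl2]; apply: hz => //; rewrite (negbTE hl2) andbF.
    have hh : A i j = 2^-1 by lra.
    case: (k =P j) => [->|hk].
      have -> : (j == rev_ord j) = false by apply/eqP.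
      by rewrite hh /= ?eqxx ?mulr1n ?mulr0n; lra.
    case: (k =P rev_ord j) => [->|hk'].
      by rewrite -hsym hh ?eqxx ?mulr1n ?mulr0n; lra.
    have -> : A i k = 0.
      by apply: hz; [apply/eqP | apply/negP => /andP [_ /eqP]].
    by rewrite /= ?mulr0n; lra.
- have hs := hsum i.
  rewrite (bigD1 j) //= big1 ?addr0 in hs; last first.
    by move=> l hl; apply: hz => //; rewrite (introF eqP hi).
  case: (k =P j) => [->|hk]; first by rewrite hs.
  by apply: hz; [apply/eqP | rewrite (introF eqP hi)].
Qed.

Theorem mainTheorem1 (R : realType) (m n : nat) (hm : (0 < m)%N) (hn : (0 < n)%N)
  (A : 'M[R]_(m, n)) :
  extreme_point (@Gamma_pi R m n) A ->
  exists P : 'M[R]_(m, n), rect_perm_mx P /\ A = 2^-1 *: (P + mxpi P).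
Proof.
move=> hE.
have [f hf] := fin_all_exists (@row_shape R m n A hE).
have hAc := @centroE R m n A hE.1.1.
exists (\matrix_(i, k) if (i <= rev_ord i)%N then (k == f i)%:R
                       else (k == rev_ord (f (rev_ord i)))%:R).
split.
- split.
  + by move=> i k; rewrite mxE; case: ifP => _; case: eqP => _; [right|left|right|left].
  + move=> i; exists (if (i <= rev_ord i)%N then f i else rev_ord (f (rev_ord i))).
    split; first by rewrite mxE; case: (i <= rev_ord i)%N; rewrite eqxx.
    move=> k; rewrite mxE; case: ifP => _; case: eqP => // _ /= /eqP;
      by rewrite eq_sym oner_eq0.
- apply/matrixP => i k; rewrite /mxpi !mxE !rev_ordK.
  case: (ltngtP i (rev_ord i)) => h.
  + have hne : (i == rev_ord i) = false by apply/eqP => e; move: h; rewrite -e ltnn.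
    rewrite rev_eq rev_ordK hf hne; lra.
  + have hne : (rev_ord i == i) = false by apply/eqP => e; move: h; rewrite e ltnn.
    rewrite [A i k]hAc hf rev_ordK hne !rev_eq; lra.
  + have hi : i = rev_ord i by apply: val_inj.
    rewrite hf -hi eqxx rev_eq; lra.
Qed.
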